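(* Let $C$ be a closed convex subset of a Banach space and let $T:C\to C$ be nonexpansive. Suppose that for some $\alpha\in(0,1)$ the mapping $F=(I-\alpha T)^{-1}(1-\alpha)I:C\to C$ satisfies $F(D)=D$ for some nonempty bounded set $D\subset C$. Then $T$ has a fixed point.
   Context: $T$ nonexpansive means $\|Tx-Ty\|\le\|x-y\|$ for all $x,y\in C$. For $x\in C$, $Fx$ is the unique point $y\in C$ satisfying $y-\alpha Ty=(1-\alpha)x$ (equivalently, $y=\alpha Ty+(1-\alpha)x$), which exists and is unique by the Banach contraction principle. *)

(* Defs.v *)
From HB Require Import structures.
From mathcomp Require Import all_boot all_order all_algebra.
From mathcomp Require Import all_classical all_reals all_analysis.
Set Implicit Arguments. Unset Strict Implicit. Unset Printing Implicit Defensive.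
Import Order.TTheory GRing.Theory Num.Theory.
Import numFieldNormedType.Exports.
Local Open Scope classical_set_scope.
Local Open Scope ring_scope.

Definition nonexpansive_on (R : realType) (E : normedModType R)
    (C : set E) (T : E -> E) : Prop :=
  forall x y, C x -> C y -> `|T x - T y| <= `|x - y|.

(* F x := the (unique) y in C with y = alpha T y + (1 - alpha) x,
   i.e. F = (I - alpha T)^{-1} (1 - alpha) I.  Chosen via [get]; when C is
   closed convex, T : C -> C nonexpansive, 0 < alpha < 1 and x in C, such a
   y exists and is unique (Banach contraction principle). *)
Definition resolventF (R : realType) (E : normedModType R)
    (C : set E) (T : E -> E) (alpha : R) (x : E) : E :=
  get [set y | C y /\ y = alpha *: T y + (1 - alpha) *: x].

(* Main.v *)
Require Import Defs.
From HB Require Import structures.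
From mathcomp Require Import all_boot all_order all_algebra.
From mathcomp Require Import all_classical all_reals all_analysis.
From mathcomp Require Import lra.
Import Order.TTheory GRing.Theory Num.Theory.
Import numFieldNormedType.Exports.
Local Open Scope classical_set_scope.
Local Open Scope ring_scope.

Lemma core_ineq (R : realType) (E : normedModType R) (alpha c : R)
    (d e : nat -> E) :
  (forall i, `|e i| <= c) -> (forall i, `|d i| <= c) ->
  (forall i, d i = alpha *: e i + (1 - alpha) *: d i.+1) ->
  0 <= alpha -> alpha < 1 ->
  forall n j (u : E) (a k : R), 0 <= k -> n%:R * k <= a * (1 - alpha) ^+ n ->
  `|a *: d j + u| <= `|u + k *: \sum_(i < n) d (j + i)%N| + (a - n%:R * k) * c.
Proof.
move=> he hd hde a0 a1; elim=> [|n IH] j u a k k0 h.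
  rewrite big_ord0 scaler0 addr0 mul0r subr0.
  rewrite mul0r expr0 mulr1 in h.
  apply: (le_trans (ler_normD _ _)); rewrite normrZ ger0_norm // addrC lerD2l.
  by rewrite ler_wpM2l.
have p0 : 0 < (1 - alpha) ^+ n.+1 by apply: exprn_gt0; rewrite subr_gt0.
have p1 : (1 - alpha) ^+ n.+1 <= 1 by apply: exprn_ile1; lra.
have nk0 : 0 <= n%:R * k by rewrite mulr_ge0.
have aa : 0 <= a.
  have : 0 <= a * (1 - alpha) ^+ n.+1 by apply: le_trans h; rewrite mulr_ge0.
  by rewrite pmulr_lge0.
have ak : k <= a.
  apply: le_trans (_ : a * (1 - alpha) ^+ n.+1 <= a); last by rewrite ler_piMr.
  apply: le_trans h; rewrite -natr1 mulrDl mul1r lerDr //.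
have eq1 : a *: d j + u = (((a - k) * (1 - alpha)) *: d j.+1 + (u + k *: d j))
                           + ((a - k) * alpha) *: e j.
  rewrite -[a in LHS](subrK k) scalerDl -addrA [k *: d j + u]addrC.
  rewrite {1}(hde j) scalerDr !scalerA.
  set A := _ *: e j; set B := _ *: d j.+1; set Cc := u + _.
  rewrite addrA [A + B]addrC /Cc !addrA -[B + A + u]addrA [A + u]addrC addrA.
  by rewrite [LHS]addrAC.
rewrite eq1; apply: (le_trans (ler_normD _ _)).
have IH' := IH j.+1 (u + k *: d j) ((a - k) * (1 - alpha)) k k0.
have cond : n%:R * k <= (a - k) * (1 - alpha) * (1 - alpha) ^+ n.
  rewrite -mulrA -exprS mulrBl.
  have : k * (1 - alpha) ^+ n.+1 <= k by rewrite ler_piMr.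
  move: h; rewrite -natr1 mulrDl mul1r => h; lra.
have {}IH' := IH' cond.
have ek : `|((a - k) * alpha) *: e j| <= ((a - k) * alpha) * c.
  by rewrite normrZ ger0_norm ?mulr_ge0 ?subr_ge0 // ler_wpM2l ?mulr_ge0 ?subr_ge0.
have sumE : k *: \sum_(i < n.+1) d (j + i)%N = k *: d j + k *: \sum_(i < n) d (j.+1 + i)%N.
  by rewrite big_ord_recl addn0 scalerDr; congr (_ + _ *: _); apply: eq_bigr => i _; rewrite addnS.
rewrite sumE [u + (_ + _)]addrA.
apply: (le_trans (lerD IH' ek)).
rewrite -[leLHS]addrA lerD2l -mulrDl; apply: ler_wpM2r.
  exact: le_trans (normr_ge0 _) (hd 0%N).
rewrite -natr1; lra.
Qed.

Lemma telesc (R : realType) (E : normedModType R) (z : nat -> E) j n :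
  \sum_(i < n) (z (j + i).+1 - z (j + i)%N) = z (j + n)%N - z j.
Proof.
elim: n => [|n IH]; first by rewrite big_ord0 addn0 subrr.
rewrite big_ord_recr /= IH addnS.
by rewrite addrC addrA subrK.
Qed.

Theorem corollary3p4 (R : realType) (E : completeNormedModType R)
    (C : set E) (T : E -> E) (alpha : R) (D : set E) :
  closed C -> convex_set C ->
  (forall x, C x -> C (T x)) -> nonexpansive_on C T ->
  0 < alpha -> alpha < 1 ->
  D `<=` C -> D !=set0 -> [bounded x | x in D] ->
  resolventF C T alpha @` D = D ->
  exists x, C x /\ T x = x.
Proof.
move=> clC cvC TC neT a0 a1 DC [x0 Dx0] bD FD.
set F := resolventF C T alpha.
have convC x y : C x -> C y -> C (alpha *: x + (1 - alpha) *: y).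
  move=> Cx Cy.
  have := cvC x y (Itv01 (ltW a0) (ltW a1)) (mem_set Cx) (mem_set Cy).
  by rewrite inE.
have Fspec y : C y -> C (F y) /\ F y = alpha *: T (F y) + (1 - alpha) *: y.
  move=> Cy; rewrite /F /resolventF.
  apply: (@getPex _ [set w | C w /\ w = alpha *: T w + (1 - alpha) *: y]).
  pose g := fun w => alpha *: T w + (1 - alpha) *: y.
  have gS : {homo g : w / C w >-> C w} by move=> w Cw; apply: convC => //; exact: TC.
  have ctr : is_contraction (mkfun_fun gS).
    exists (NngNum (ltW a0)); split => //=; move=> [x1 x2] [/= Cx1 Cx2].
    rewrite /mkfun /g opprD addrACA subrr addr0 -scalerBr normrZ ger0_norm; last exact: ltW.
    by apply: ler_wpM2l; [exact: ltW | exact: neT].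
  have [p Cp pE] := @banach_fixed_point _ _ C (mkfun_fun gS) ctr clC (ex_intro _ y Cy).
  by exists p.
have preP x : D x -> exists y, D y /\ F y = x.
  move=> Dx; have : (F @` D) x by rewrite FD.
  by case=> y Dy Fy; exists y.
pose pre x := get [set y | D y /\ F y = x].
pose z k := iter k pre x0.
have zD k : D (z k).
  elim: k => [//|k IH]; rewrite /z iterS -/(z k).
  by have [] := @getPex _ [set y | D y /\ F y = z k] (preP _ IH).
have zF k : F (z k.+1) = z k.
  by rewrite /z iterS -/(z k); have [] := @getPex _ [set y | D y /\ F y = z k] (preP _ (zD k)).
have zeq k : z k = alpha *: T (z k) + (1 - alpha) *: z k.+1.
  by have [_ h] := Fspec _ (DC _ (zD k.+1)); rewrite zF in h.
have [B HB] : exists B, forall x, D x -> `|x| <= B.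
  case: bD => M0 [_ HM]; exists (M0 + 1) => x Dx.
  by apply: (HM (M0 + 1)); rewrite ?ltrDl.
pose d k := z k.+1 - z k.
pose e k := T (z k.+1) - T (z k).
have hde k : d k = alpha *: e k + (1 - alpha) *: d k.+1.
  rewrite /d /e !scalerBr [X in X - _ = _](zeq k.+1) [X in _ - X = _](zeq k).
  by rewrite opprD addrACA.
have dB k : `|d k| <= B + B.
  by apply: (le_trans (ler_normB _ _)); apply: lerD; apply: HB.
pose S := [set r | exists k, r = `|d k|].
have hS : has_sup S.
  split; first by exists `|d 0%N|, 0%N.
  by exists (B + B) => r [k ->]; exact: dB.
pose c := sup S.
have dc k : `|d k| <= c by apply: sup_upper_bound => //; exists k.
have ed k : `|e k| <= `|d k| by apply: neT; apply: DC.
have ec k : `|e k| <= c by exact: le_trans (ed k) (dc k).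
have c0 : 0 <= c by exact: le_trans (normr_ge0 _) (dc 0%N).
have B0 : 0 <= B by exact: le_trans (normr_ge0 _) (HB _ Dx0).
have cle0 : c <= 0.
  rewrite leNgt; apply/negP => cpos.
  pose n := (Num.Def.archi_bound (4 * B / c)).+1.
  have nlt : 4 * B / c < n%:R.
    apply: lt_le_trans (archi_boundP _) _; first by rewrite divr_ge0 // mulr_ge0.
    by rewrite ler_nat.
  have nc : 4 * B < n%:R * c by rewrite -ltr_pdivrMr.
  have n0 : 0 < n%:R :> R by rewrite ltr0n.
  pose p := (1 - alpha) ^+ n.
  have p0 : 0 < p by apply: exprn_gt0; rewrite subr_gt0.
  have eps0 : 0 < p * c / 2 by rewrite divr_gt0 // mulr_gt0.
  have [r [j ->]] := sup_adherent eps0 hS.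
  rewrite -/c => hj.
  pose k := p / n%:R.
  have k0 : 0 < k by rewrite divr_gt0.
  have nk : n%:R * k = p by rewrite /k mulrC -mulrA mulVf ?mulr1 // gt_eqF.
  have := @core_ineq R E alpha c d e ec dc hde (ltW a0) a1 n j 0 1 k (ltW k0).
  rewrite nk mul1r lexx => /(_ isT).
  rewrite scale1r addr0 add0r.
  have -> : \sum_(i < n) d (j + i)%N = z (j + n)%N - z j by rewrite -telesc.
  rewrite normrZ gtr0_norm //.
  have zz : `|z (j + n)%N - z j| <= B + B.
    by apply: (le_trans (ler_normB _ _)); apply: lerD; apply: HB.
  have kz : k * `|z (j + n)%N - z j| <= k * (B + B) by rewrite ler_wpM2l // ltW.
  have : k * (4 * B) < k * (n%:R * c) by rewrite ltr_pM2l.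
  have kn : k * (n%:R * c) = p * c by rewrite mulrA (mulrC k) nk.
  rewrite kn => h2 h1.
  lra.
have d00 : d 0%N = 0 by apply/normr0_eq0/le_anti; rewrite normr_ge0 andbT (le_trans (dc 0%N)).
have z10 : z 1%N = z 0%N by apply/eqP; rewrite -subr_eq0; apply/eqP.
exists (z 0%N); split; first exact: DC.
have h := zeq 0%N; rewrite z10 in h.
apply: (scalerI (lt0r_neq0 a0)).
apply: (addIr ((1 - alpha) *: z 0%N)).
by rewrite -h -scalerDl subrKC scale1r.
Qed.
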